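(* Let $\mathfrak m$ be an infinite cardinal, let $(E,\mathcal L)$ be an $\mathfrak m$-exact local representation over an infinite set $B$, and let $B'\subseteq B$ be infinite. Let $E'=\{e\in E:\{\psi\in B^E:\psi_e\in B'\}\in\mathcal L\}$, equipped with the sub-local-representation structure over $B'$. Then $E'$ is an $\mathfrak m$-exact local representation over $B'$.
   Context: A local representation over a set $B$ is a pair $(E,\mathcal L)$ with $\mathcal L$ an ultrafilter on the cylinder Boolean algebra of $B^E$ (sets $\{\psi\in B^E:(\psi_{e_1},\dots,\psi_{e_n})\in R\}$, $e_i\in E$, $R\subseteq B^n$). Separated: $\{\psi:\psi_{e_1}=\psi_{e_2}\}\in\mathcal L$ only if $e_1=e_2$. The sub-local-representation structure on $E'$ over $B'$ is the ultrafilter $\mathcal L'$ on the cylinder algebra of $B'^{E'}$ with $\{\psi'\in B'^{E'}:(\psi'_{e_1},\dots,\psi'_{e_n})\in R\}\in\mathcal L'$ iff $\{\psi\in B^E:(\psi_{e_1},\dots,\psi_{e_n})\in R\}\in\mathcal L$, for $e_i\in E'$, $R\subseteq B'^n$. For $\eta:I\to E$, the pullback of $\mathcal L$ by $\eta$ is the ultrafilter on the cylinder algebra of $B^I$ of cylinders $C$ with $\{\psi:(\psi_{\eta(i)})_{i\in I}\in C\}\in\mathcal L$; for $i_0\notin I$, the projection to $B^I$ of an ultrafilter $\mathcal U$ on the cylinders of $B^{I\cup\{i_0\}}$ is the set of cylinders of $B^I$ whose preimage under restriction is in $\mathcal U$. For an infinite cardinal $\mathfrak m$, $(E,\mathcal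 L)$ is $\mathfrak m$-exact if it is separated and for every $I$ with $|I|<\mathfrak m$, $i_0\notin I$, $\eta:I\to E$, and ultrafilter $\mathcal U$ on the cylinder algebra of $B^{I\cup\{i_0\}}$ projecting to the pullback of $\mathcal L$ by $\eta$, there is $e\in E$ such that the pullback of $\mathcal L$ by $\eta\cup\{i_0\mapsto e\}$ equals $\mathcal U$. *)

(* Defs.v *)
From Stdlib Require Import List.
Import ListNotations.

Definition cylinder {X Y : Type} (C : (X -> Y) -> Prop) : Prop :=
  exists (xs : list X) (R : list Y -> Prop),
    forall psi, C psi <-> R (map psi xs).

Definition cyl_ultrafilter {X Y : Type} (L : ((X -> Y) -> Prop) -> Prop) : Prop :=
  (forall C, L C -> cylinder C) /\
  L (fun _ => True) /\
  ~ L (fun _ => False) /\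
  (forall C D, L C -> L D -> L (fun psi => C psi /\ D psi)) /\
  (forall C D, L C -> cylinder D -> (forall psi, C psi -> D psi) -> L D) /\
  (forall C, cylinder C -> L C \/ L (fun psi => ~ C psi)).

Definition separated {X Y : Type} (L : ((X -> Y) -> Prop) -> Prop) : Prop :=
  forall e1 e2 : X, L (fun psi => psi e1 = psi e2) -> e1 = e2.

Definition pullback {X Y I : Type} (L : ((X -> Y) -> Prop) -> Prop) (eta : I -> X)
  : ((I -> Y) -> Prop) -> Prop :=
  fun C => cylinder C /\ L (fun psi => C (fun i => psi (eta i))).

(* I ∪ {i0} with i0 ∉ I is modelled by option I (None = i0);
   projection of an ultrafilter on cylinders of Y^(option I) to Y^I. *)
Definition projection {Y I : Type} (U : ((option I -> Y) -> Prop) -> Prop)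
  : ((I -> Y) -> Prop) -> Prop :=
  fun C => cylinder C /\ U (fun psi => C (fun i => psi (Some i))).

Definition extend {X I : Type} (eta : I -> X) (x : X) : option I -> X :=
  fun o => match o with Some i => eta i | None => x end.

Definition injective {A B : Type} (f : A -> B) : Prop :=
  forall a1 a2, f a1 = f a2 -> a1 = a2.

Definition card_lt (I M : Type) : Prop :=
  (exists f : I -> M, injective f) /\ ~ (exists g : M -> I, injective g).

Definition infinite (A : Type) : Prop := exists f : nat -> A, injective f.

(* The infinite cardinal m is represented by an (infinite) type M with |M| = m.
   (X, L) is an m-exact local representation over Y. *)
Definition m_exact (M : Type) {X Y : Type} (L : ((X -> Y) -> Prop) -> Prop) : Prop :=
  cyl_ultrafilter L /\ separated L /\
  forall (I : Type), card_lt I M ->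
  forall (eta : I -> X) (U : ((option I -> Y) -> Prop) -> Prop),
    cyl_ultrafilter U ->
    (forall C, projection U C <-> pullback L eta C) ->
    exists x : X, forall C, pullback L (extend eta x) C <-> U C.

Definition subE {E B : Type} (L : ((E -> B) -> Prop) -> Prop) (B' : B -> Prop) : Type :=
  { e : E | L (fun psi => B' (psi e)) }.

(* Sub-local-representation structure on E' over B':
   a cylinder {psi' : (psi'_{e_1},...,psi'_{e_n}) in R} (e_i in E', R ⊆ B'^n)
   is in L' iff {psi : (psi_{e_1},...,psi_{e_n}) in R} is in L. *)
Definition subLR {E B : Type} (L : ((E -> B) -> Prop) -> Prop) (B' : B -> Prop)
  : ((subE L B' -> {b : B | B' b}) -> Prop) -> Prop :=
  fun C' => exists (es : list (subE L B')) (R : list {b : B | B' b} -> Prop),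
    (forall psi', C' psi' <-> R (map psi' es)) /\
    L (fun psi => exists bs : list {b : B | B' b},
          map (@proj1_sig B B') bs = map (fun e => psi (proj1_sig e)) es /\ R bs).

(* Main.v *)
Require Import Defs.
From Stdlib Require Import List.
From Stdlib Require Import ClassicalEpsilon ProofIrrelevance FunctionalExtensionality PropExtensionality.
Import ListNotations.

Lemma fa {A} (l1 l2 : list A) : firstn (length l1) (l1 ++ l2) = l1.
Proof. induction l1; simpl; [reflexivity| f_equal; auto]. Qed.
Lemma sa {A} (l1 l2 : list A) : skipn (length l1) (l1 ++ l2) = l2.
Proof. induction l1; simpl; auto. Qed.

Lemma cyl_map {X Y X' Y'} (h : X -> X') (k : Y' -> Y) (C : (X -> Y) -> Prop) :
  cylinder C -> cylinder (fun psi : X' -> Y' => C (fun x => k (psi (h x)))).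
Proof.
  intros [xs [R HR]]. exists (map h xs), (fun ys => R (map k ys)). intro psi.
  rewrite HR, !map_map. reflexivity.
Qed.

Lemma cyl_true {X Y} : @cylinder X Y (fun _ => True).
Proof. exists [], (fun _ => True). tauto. Qed.

Lemma cyl_and {X Y} (C D : (X -> Y) -> Prop) : cylinder C -> cylinder D ->
  cylinder (fun psi => C psi /\ D psi).
Proof.
  intros [xs [R HR]] [ys [S HS]].
  exists (xs ++ ys), (fun l => R (firstn (length xs) l) /\ S (skipn (length xs) l)).
  intro psi. rewrite map_app.
  replace (length xs) with (length (map psi xs)) by apply length_map.
  rewrite fa, sa, HR, HS. tauto.
Qed.

Lemma cyl_not {X Y} (C : (X -> Y) -> Prop) : cylinder C -> cylinder (fun psi => ~ C psi).
Proof. intros [xs [R HR]]. exists xs, (fun l => ~ R l). intro psi. rewrite HR. tauto. Qed.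

Definition pb {X Y X' Y'} (V : ((X' -> Y') -> Prop) -> Prop) (F : (X' -> Y') -> (X -> Y))
  : ((X -> Y) -> Prop) -> Prop := fun C => cylinder C /\ V (fun psi => C (F psi)).

Lemma mono {X Y} (L : ((X -> Y) -> Prop) -> Prop) C D : cyl_ultrafilter L -> L C -> cylinder D ->
  (forall psi, C psi -> D psi) -> L D.
Proof. intros (_&_&_&_&H&_). eauto. Qed.

Lemma interL {X Y} (L : ((X -> Y) -> Prop) -> Prop) C D : cyl_ultrafilter L -> L C -> L D ->
  L (fun psi => C psi /\ D psi).
Proof. intros (_&_&_&H&_). eauto. Qed.

Lemma pb_ultra {X Y X' Y'} (V : ((X' -> Y') -> Prop) -> Prop) (F : (X' -> Y') -> (X -> Y)) :
  cyl_ultrafilter V -> (forall C, cylinder C -> cylinder (fun psi => C (F psi))) ->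
  cyl_ultrafilter (pb V F).
Proof.
  intros HV HF. pose proof HV as (H1&H2&H3&H4&H5&H6).
  split; [|split; [|split; [|split; [|split]]]].
  - intros C [? ?]; auto.
  - split; [apply cyl_true|auto].
  - intros [_ H]. auto.
  - intros C D [HC1 HC2] [HD1 HD2]. split; [apply cyl_and; auto|]. apply H4; auto.
  - intros C D [HC1 HC2] HD Hsub. split; auto. eapply H5; eauto.
  - intros C HC. destruct (H6 _ (HF _ HC)) as [H|H]; [left|right]; split; auto.
    apply cyl_not; auto.
Qed.

Lemma L_congr {X Y} (L : ((X -> Y) -> Prop) -> Prop) S A D : cyl_ultrafilter L -> L S ->
  cylinder A -> cylinder D -> (forall psi, S psi -> (A psi <-> D psi)) -> (L A <-> L D).
Proof.
  intros HL HS HA HD H. split; intro HX.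
  - apply (mono L (fun psi => S psi /\ A psi)); auto. apply interL; auto.
    intros psi [? ?]. apply H; auto.
  - apply (mono L (fun psi => S psi /\ D psi)); auto. apply interL; auto.
    intros psi [? ?]. apply H; auto.
Qed.

Lemma L_forall {X Y} (L : ((X -> Y) -> Prop) -> Prop) (P : Y -> Prop) (ys : list X) :
  cyl_ultrafilter L -> (forall y, In y ys -> L (fun psi => P (psi y))) ->
  L (fun psi => Forall P (map psi ys)).
Proof.
  intros HL. induction ys as [|y ys IH]; intro H.
  - apply (mono L (fun _ => True)).
    + exact HL.
    + apply HL.
    + exists [], (fun l => Forall P l). intros; simpl; tauto.
    + intros; constructor.
  - apply (mono L (fun psi => P (psi y) /\ Forall P (map psi ys))).
    + exact HL.
    + apply interL; [exact HL| |]. apply H; simpl; auto. apply IH. intros; apply H; simpl; auto.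
    + exists (y :: ys), (fun l => Forall P l). tauto.
    + intros psi [? ?]. simpl. constructor; auto.
Qed.

Section Main.
Context (E B : Type) (B' : B -> Prop) (d : {b : B | B' b}).

Definition lift (b : B) : {b : B | B' b} :=
  match excluded_middle_informative (B' b) with
  | left p => exist _ b p
  | right _ => d
  end.

Lemma lift_proj b : lift (proj1_sig b) = b.
Proof.
  destruct b as [b p]; unfold lift; simpl. destruct excluded_middle_informative as [q|n].
  - f_equal; apply proof_irrelevance.
  - contradiction.
Qed.

Lemma proj_lift b : B' b -> proj1_sig (lift b) = b.
Proof. intro p. unfold lift. destruct excluded_middle_informative; simpl; tauto. Qed.

Lemma proj_inj : forall a b : {b : B | B' b}, proj1_sig a = proj1_sig b -> a = b.
Proof. intros [a p] [b q]; simpl; intros ->. f_equal; apply proof_irrelevance. Qed.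

Lemma map_proj_inj : forall l1 l2 : list {b : B | B' b},
  map (@proj1_sig _ _) l1 = map (@proj1_sig _ _) l2 -> l1 = l2.
Proof.
  induction l1; destruct l2; simpl; intros H; try discriminate; auto.
  injection H; intros; f_equal; auto. apply proj_inj; auto.
Qed.

Variable L : ((E -> B) -> Prop) -> Prop.
Hypothesis HL : cyl_ultrafilter L.

Definition Phi (psi : E -> B) : subE L B' -> {b : B | B' b} :=
  fun e => lift (psi (proj1_sig e)).

Lemma subLR_eq : subLR L B' = pb L Phi.
Proof.
  apply functional_extensionality; intro C'. apply propositional_extensionality.
  split.
  - intros (es & R & HR & HA). split. exists es, R; auto.
    pose (ys := map (@proj1_sig _ _) es).
    assert (HS : L (fun psi => Forall B' (map psi ys))).
    { apply L_forall; auto. intros y Hy. unfold ys in Hy. apply in_map_iff in Hy.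
      destruct Hy as [[e pe] [<- _]]. exact pe. }
    apply (mono L (fun psi => Forall B' (map psi ys) /\
       exists bs, map (@proj1_sig _ _) bs = map (fun e => psi (proj1_sig e)) es /\ R bs)); auto.
    + apply interL; auto.
    + destruct (HL) as [Hc _]. apply Hc in HA.
      apply (cyl_map (@proj1_sig _ _) lift C'). exists es, R; auto.
    + intros psi [Hf [bs [Hb HRb]]]. apply HR.
      replace (map (Phi psi) es) with bs; auto. apply map_proj_inj. rewrite Hb, map_map.
      apply map_ext_in. intros e He. unfold Phi. rewrite proj_lift; auto.
      rewrite Forall_forall in Hf. apply Hf. unfold ys. rewrite map_map.
      apply in_map_iff. eauto.
  - intros [[es [R HR]] HA]. exists es, R. split; auto.
    pose (ys := map (@proj1_sig _ _) es).
    assert (HS : L (fun psi => Forall B' (map psi ys))).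
    { apply L_forall; auto. intros y Hy. unfold ys in Hy. apply in_map_iff in Hy.
      destruct Hy as [[e pe] [<- _]]. exact pe. }
    apply (mono L (fun psi => Forall B' (map psi ys) /\ C' (Phi psi))); auto.
    + apply interL; auto.
    + exists ys, (fun l => exists bs, map (@proj1_sig _ _) bs = l /\ R bs).
      intro psi. unfold ys. rewrite map_map. tauto.
    + intros psi [Hf HC]. exists (map (Phi psi) es). split.
      * rewrite map_map. apply map_ext_in. intros e He. unfold Phi. rewrite proj_lift; auto.
        rewrite Forall_forall in Hf. apply Hf. unfold ys. rewrite map_map.
        apply in_map_iff. eauto.
      * apply HR; auto.
Qed.

End Main.

Theorem mainTheorem6 (M E B : Type) (L : ((E -> B) -> Prop) -> Prop) (B' : B -> Prop) :
  infinite M ->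
  infinite B ->
  m_exact M L ->
  infinite {b : B | B' b} ->
  m_exact M (subLR L B').
Proof.
  intros _ _ [HLu [Hsep Hex]] [f _]. pose (d := f 0).
  rewrite (subLR_eq E B B' d L HLu).
  set (Ph := Phi E B B' d L).
  set (lf := lift B B' d).
  assert (HcP : forall C, cylinder C -> cylinder (fun psi => C (Ph psi))).
  { intros C HC. exact (cyl_map (@proj1_sig _ _) lf C HC). }
  split; [apply pb_ultra; auto|split].
  - intros e1 e2 [_ H].
    assert (H2 : L (fun psi => psi (proj1_sig e1) = psi (proj1_sig e2))).
    { apply (mono L (fun psi => (B' (psi (proj1_sig e1)) /\ B' (psi (proj1_sig e2))) /\
          Ph psi e1 = Ph psi e2)).
      - exact HLu.
      - apply interL; auto. apply interL; auto. apply (proj2_sig e1). apply (proj2_sig e2).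
      - exists [proj1_sig e1; proj1_sig e2],
          (fun l => match l with [a; b] => a = b | _ => False end). simpl. tauto.
      - intros psi [[h1 h2] h]. apply (f_equal (@proj1_sig _ _)) in h.
        unfold Ph, Phi in h. rewrite !proj_lift in h; auto. }
    apply Hsep in H2. destruct e1 as [x1 p1], e2 as [x2 p2]. simpl in H2. subst.
    f_equal; apply proof_irrelevance.
  - intros I Hc eta U HU Hpr.
    set (etaB := fun i => proj1_sig (eta i)).
    set (J := fun (phi : option I -> {b | B' b}) (o : option I) => proj1_sig (phi o)).
    set (Us := pb U J).
    assert (HJ : forall C, cylinder C -> cylinder (fun phi => C (J phi))).
    { intros C HC. exact (cyl_map (fun o => o) (@proj1_sig _ _) C HC). }
    assert (HUs : cyl_ultrafilter Us) by (apply pb_ultra; auto).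
    assert (Hag : forall C : (I -> B) -> Prop, cylinder C ->
       (L (fun psi => C (fun i => proj1_sig (lf (psi (etaB i))))) <->
        L (fun psi => C (fun i => psi (etaB i))))).
    { intros C HC. pose proof HC as [xs [R HR]].
      apply (L_congr L (fun psi => Forall B' (map psi (map etaB xs)))).
      - exact HLu.
      - apply L_forall; auto. intros y Hy. apply in_map_iff in Hy.
        destruct Hy as [i [<- _]]. apply (proj2_sig (eta i)).
      - exact (cyl_map etaB (fun b => proj1_sig (lf b)) C HC).
      - exact (cyl_map etaB (fun b => b) C HC).
      - intros psi Hf. rewrite !HR.
        assert (Heq : map (fun i => proj1_sig (lf (psi (etaB i)))) xs = map (fun i => psi (etaB i)) xs).
        { apply map_ext_in. intros i Hi. unfold lf. rewrite proj_lift; auto.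
          rewrite Forall_forall in Hf. apply Hf. rewrite map_map. apply in_map_iff. eauto. }
        rewrite Heq. tauto. }
    assert (Hcl : forall C, projection Us C <-> pullback L etaB C).
    { intro C. unfold projection, pullback, Us, pb.
      split.
      - intros [HC [_ HU1]]. split; auto.
        pose (C' := fun g : I -> {b | B' b} => C (fun i => proj1_sig (g i))).
        assert (HC' : cylinder C') by exact (cyl_map (fun i => i) (@proj1_sig _ _) C HC).
        destruct (proj1 (Hpr C') (conj HC' HU1)) as [_ [_ HL1]].
        apply (Hag C HC). exact HL1.
      - intros [HC HL1]. split; auto.
        pose (C' := fun g : I -> {b | B' b} => C (fun i => proj1_sig (g i))).
        assert (HC' : cylinder C') by exact (cyl_map (fun i => i) (@proj1_sig _ _) C HC).
        split. exact (cyl_map Some (fun b => b) C HC).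
        assert (Hp : pullback (pb L Ph) eta C').
        { split; auto. split.
          - exact (cyl_map eta (fun b => b) C' HC').
          - apply (Hag C HC). exact HL1. }
        apply Hpr in Hp. destruct Hp as [_ Hp]. exact Hp. }
    destruct (Hex I Hc etaB Us HUs Hcl) as [x0 Hx0].
    assert (Hx0E : L (fun psi => B' (psi x0))).
    { assert (HC0 : cylinder (fun g : option I -> B => B' (g None))).
      { exists [None], (fun l => match l with [a] => B' a | _ => False end). simpl; tauto. }
      assert (HU0 : Us (fun g : option I -> B => B' (g None))).
      { split; auto. apply (mono U (fun _ => True)); auto. apply HU. exact (HJ _ HC0).
        intros phi _. apply (proj2_sig (phi None)). }
      destruct (proj2 (Hx0 _) HU0) as [_ H]. exact H. }
    exists (exist _ x0 Hx0E). intro C'.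
    set (x := exist _ x0 Hx0E : subE L B').
    set (C := fun g : option I -> B => C' (fun o => lf (g o))).
    assert (eq1 : (fun psi => C' (fun o => Ph psi (extend eta x o))) =
                  (fun psi => C (fun o => psi (extend etaB x0 o)))).
    { apply functional_extensionality; intro psi. unfold C, Ph, Phi. f_equal.
      apply functional_extensionality; intros [o|]; reflexivity. }
    assert (eq2 : (fun phi => C (J phi)) = C').
    { apply functional_extensionality; intro phi. unfold C, J. f_equal.
      apply functional_extensionality; intro o. apply lift_proj. }
    unfold pullback, pb. split.
    + intros [HC' [_ HL1]].
      assert (HC : cylinder C) by exact (cyl_map (fun o => o) lf C' HC').
      change (L (fun psi => C' (fun o => Ph psi (extend eta x o)))) in HL1.
      rewrite eq1 in HL1.
      destruct (proj1 (Hx0 C) (conj HC HL1)) as [_ HU1]. rewrite eq2 in HU1. exact HU1.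
    + intro HU1. assert (HC' : cylinder C') by (apply HU; auto).
      assert (HC : cylinder C) by exact (cyl_map (fun o => o) lf C' HC').
      split; auto. split.
      * exact (cyl_map (extend eta x) (fun b => b) C' HC').
      * change (L (fun psi => C' (fun o => Ph psi (extend eta x o)))).
        rewrite eq1.
        assert (HUs1 : Us C) by (split; auto; rewrite eq2; exact HU1).
        destruct (proj2 (Hx0 C) HUs1) as [_ H]. exact H.
Qed.
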